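(* Assume $0<x^0<u^*$ and let $c>0$ be such that $\eta(c)<u^*$. For $\epsilon\in(0,2(c\wedge(\overline x-c)))$ let $d_\epsilon=\frac{1-\epsilon(\overline x-c-\epsilon/2)}{c-\epsilon/2}$ and define the density $f_\epsilon$ on $[0,\overline x]$ by $f_\epsilon(x)=d_\epsilon$ for $x\in[0,c-\epsilon]$, $f_\epsilon(x)=(1-\frac{d_\epsilon}{\epsilon})x+c(\frac{d_\epsilon}{\epsilon}-1)+\epsilon$ for $x\in[c-\epsilon,c]$, and $f_\epsilon(x)=\epsilon$ for $x\in[c,\overline x]$ (and $f_\epsilon=0$ elsewhere). Suppose the law of $Y$ has density $f_\epsilon$ (so that $\bar y=\overline x$), let $b_\epsilon$ be the corresponding solution of the Cauchy problem below and $\overline m$ the corresponding point $\min\{m\in[0,\overline x]:b_\epsilon(m)=m\}$. Then there exists $\epsilon>0$ such that $\overline m<u^*$.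
   Context: $\mathcal I=(\alpha,\infty)$, $-\infty\le\alpha<0$; $\mu,\sigma:\mathcal I\to\mathbb R$ Lipschitz with $\sigma>0$, $\alpha,+\infty$ natural boundaries of $dX_t=\mu(X_t)dt+\sigma(X_t)dB_t$; $r>0$; $U:[0,\infty)\to[0,\infty)$. Assumptions: (a) $\mu,\sigma$ are $C^1$ with Lipschitz derivatives, $\mu(0)>rU(0)$, $\sup_{x\ge0}\mu'(x)<r$; (b) $U$ is nondecreasing, concave, $C^2$ on $[0,\infty)$, and for some $u^*\ge0$: $U'\ge1$ on $[0,u^*]$, $U'=1$ on $[u^*,\infty)$, $\mu U'+\frac12\sigma^2U''-rU>0$ on $[0,u^* )$; (c) $\mu$ is twice differentiable with $\mu''\le0$ on $[0,\infty)$. Notation. $\overline x>0$ is the unique point with $\mu-rU>0$ on $[0,\overline x)$ and $<0$ on $(\overline x,\infty)$. $\psi,\phi$ are the positive increasing and decreasing solutions of $\frac12\sigma^2u''+\mu u'-ru=0$. $D(x,m)=\psi'(x)\phi(m)-\phi'(x)\psi(m)$, $N(x,m)=\phi(x)\psi(m)-\psi(x)\phi(m)+D(x,m)\frac{\mu(x)}{r}-D(x,x)U(m)$, $G(x)=1-\mu'(x)/r$. For $m\in[0,\overline x]$, $\eta(m)$ is the unique solution $x\ge0$ of $N(x,m)=0$ (known to exist; $\eta$ is increasing with $\eta(\overline x)=\overline x$ and $\eta(m)\ge m$), and $x^0=\eta(0)$. Given a density $f$ of $Y$ with distribution function $F$ and support bound $\bar y$, let $E(x,m)=\frac{f(m)/F(m)}{G(x)}\frac{N(x,m)}{D(x,m)}$;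 the Cauchy problem is: find $b:[0,\overline x]\to[0,\overline x]$ with $b\in C([0,\overline x])\cap C^1((0,\overline x\wedge\bar y))$, $b(0)=x^0$, $b'(m)=E(b(m),m)$ on $(0,\overline x\wedge\bar y)$, $b\equiv b(\overline x\wedge\bar y)$ on $(\overline x\wedge\bar y,\overline x]$ (it has a unique solution). *)

(* Defs.v *)
From Stdlib Require Import Reals Lra.
From Coquelicot Require Import Coquelicot.
Open Scope R_scope.

(** The state space I = (alpha, +oo), alpha in [-oo, 0). *)
Definition inI (alpha : Rbar) (x : R) : Prop := Rbar_lt alpha x.

Definition Lipschitz_on (P : R -> Prop) (f : R -> R) : Prop :=
  exists L : R, forall x y, P x -> P y -> Rabs (f x - f y) <= L * Rabs (x - y).

(** Scale density s and speed density m of dX = mu(X)dt + sigma(X)dB,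
    with reference point 0 (which lies in I). *)
Definition scale_dens (mu sigma : R -> R) (x : R) : R :=
  exp (- RInt (fun y => 2 * mu y / (sigma y ^ 2)) 0 x).
Definition speed_dens (mu sigma : R -> R) (x : R) : R :=
  2 / (sigma x ^ 2 * scale_dens mu sigma x).

(** Feller's boundary classification (Karlin-Taylor): a boundary is natural iff
    both Sigma and N are infinite.  Right boundary +oo: *)
Definition natural_right (mu sigma : R -> R) : Prop :=
  let s := scale_dens mu sigma in
  let m := speed_dens mu sigma in
  filterlim (fun t => RInt (fun y => RInt m 0 y * s y) 0 t)
            (Rbar_locally p_infty) (Rbar_locally p_infty) /\
  filterlim (fun t => RInt (fun y => RInt s 0 y * m y) 0 t)
            (Rbar_locally p_infty) (Rbar_locally p_infty).

(** filter "t -> alpha from inside I" *)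
Definition to_left_end (alpha : Rbar) : (R -> Prop) -> Prop :=
  match alpha with
  | Finite a => at_right a
  | _ => Rbar_locally m_infty
  end.

Definition natural_left (alpha : Rbar) (mu sigma : R -> R) : Prop :=
  let s := scale_dens mu sigma in
  let m := speed_dens mu sigma in
  filterlim (fun t => RInt (fun y => RInt m y 0 * s y) t 0)
            (to_left_end alpha) (Rbar_locally p_infty) /\
  filterlim (fun t => RInt (fun y => RInt s y 0 * m y) t 0)
            (to_left_end alpha) (Rbar_locally p_infty).

Definition diffusion_assumptions (alpha : Rbar) (mu sigma : R -> R) : Prop :=
  Rbar_lt alpha 0 /\
  Lipschitz_on (inI alpha) mu /\ Lipschitz_on (inI alpha) sigma /\
  (forall x, inI alpha x -> 0 < sigma x) /\
  natural_left alpha mu sigma /\ natural_right mu sigma /\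
  (forall x, inI alpha x -> ex_derive mu x /\ ex_derive sigma x) /\
  Lipschitz_on (inI alpha) (Derive mu) /\ Lipschitz_on (inI alpha) (Derive sigma) /\
  (forall x, 0 <= x -> ex_derive (Derive mu) x /\ Derive (Derive mu) x <= 0).

(** Assumption on U : [0,oo) -> [0,oo) (only its values on [0,oo) matter);
    U1, U2 are its first and second derivatives on [0,oo)
    (C^2 on [0,oo): derivatives on (0,oo) extending continuously to 0). *)
Definition within_nonneg : R -> Prop := fun y => 0 <= y.

Definition U_assumptions (mu sigma : R -> R) (r : R) (U U1 U2 : R -> R) (ustar : R) : Prop :=
  (forall x, 0 <= x -> 0 <= U x) /\
  (forall x y, 0 <= x -> x <= y -> U x <= U y) /\
  (forall x y t, 0 <= x -> 0 <= y -> 0 <= t <= 1 ->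
      t * U x + (1 - t) * U y <= U (t * x + (1 - t) * y)) /\
  (forall x, 0 < x -> is_derive U x (U1 x) /\ is_derive U1 x (U2 x)) /\
  filterlim U (within within_nonneg (locally 0)) (locally (U 0)) /\
  (forall x, 0 <= x ->
     filterlim U1 (within within_nonneg (locally x)) (locally (U1 x)) /\
     filterlim U2 (within within_nonneg (locally x)) (locally (U2 x))) /\
  0 <= ustar /\
  (forall x, 0 <= x <= ustar -> 1 <= U1 x) /\
  (forall x, ustar <= x -> U1 x = 1) /\
  (forall x, 0 <= x < ustar ->
     mu x * U1 x + / 2 * sigma x ^ 2 * U2 x - r * U x > 0).

Definition a_assumptions (mu : R -> R) (r : R) (U : R -> R) : Prop :=
  mu 0 > r * U 0 /\
  exists k, k < r /\ forall x, 0 <= x -> Derive mu x <= k.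

Definition is_xbar (mu : R -> R) (r : R) (U : R -> R) (xbar : R) : Prop :=
  0 < xbar /\
  (forall x, 0 <= x < xbar -> mu x - r * U x > 0) /\
  (forall x, xbar < x -> mu x - r * U x < 0).

Definition solves_ode (alpha : Rbar) (mu sigma : R -> R) (r : R) (u : R -> R) : Prop :=
  forall x, inI alpha x ->
    ex_derive u x /\ ex_derive (Derive u) x /\
    / 2 * sigma x ^ 2 * Derive (Derive u) x + mu x * Derive u x - r * u x = 0.

Definition is_psi (alpha : Rbar) (mu sigma : R -> R) (r : R) (psi : R -> R) : Prop :=
  solves_ode alpha mu sigma r psi /\
  (forall x, inI alpha x -> 0 < psi x) /\
  (forall x y, inI alpha x -> inI alpha y -> x < y -> psi x < psi y).

Definition is_phi (alpha : Rbar) (mu sigma : R -> R) (r : R) (phi : R -> R) : Prop :=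
  solves_ode alpha mu sigma r phi /\
  (forall x, inI alpha x -> 0 < phi x) /\
  (forall x y, inI alpha x -> inI alpha y -> x < y -> phi y < phi x).

Definition Dfun (psi phi : R -> R) (x m : R) : R :=
  Derive psi x * phi m - Derive phi x * psi m.

Definition Nfun (psi phi mu : R -> R) (r : R) (U : R -> R) (x m : R) : R :=
  phi x * psi m - psi x * phi m + Dfun psi phi x m * (mu x / r)
  - Dfun psi phi x x * U m.

Definition Gfun (mu : R -> R) (r : R) (x : R) : R := 1 - Derive mu x / r.

Definition is_eta (psi phi mu : R -> R) (r : R) (U : R -> R) (xbar : R) (eta : R -> R) : Prop :=
  forall m, 0 <= m <= xbar -> 0 <= eta m /\ Nfun psi phi mu r U (eta m) m = 0.

Definition d_eps (c xbar eps : R) : R :=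
  (1 - eps * (xbar - c - eps / 2)) / (c - eps / 2).

Definition f_eps (c xbar eps : R) (x : R) : R :=
  let d := d_eps c xbar eps in
  if Rlt_dec x 0 then 0
  else if Rle_dec x (c - eps) then d
  else if Rle_dec x c then (1 - d / eps) * x + c * (d / eps - 1) + eps
  else if Rle_dec x xbar then eps
  else 0.

Definition F_eps (c xbar eps : R) (m : R) : R := RInt (f_eps c xbar eps) 0 m.

Definition Efun (f F : R -> R) (psi phi mu : R -> R) (r : R) (U : R -> R) (x m : R) : R :=
  (f m / F m) / Gfun mu r x * (Nfun psi phi mu r U x m / Dfun psi phi x m).

(** The Cauchy problem (here ybar = xbar, so xbar /\ ybar = xbar and the
    "constant after xbar /\ ybar" condition is vacuous). *)
Definition cauchy_sol (f F : R -> R) (psi phi mu : R -> R) (r : R) (U : R -> R)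
    (xbar x0 : R) (b : R -> R) : Prop :=
  (forall m, 0 <= m <= xbar -> 0 <= b m <= xbar) /\
  (forall m, 0 <= m <= xbar ->
     filterlim b (within (fun y => 0 <= y <= xbar) (locally m)) (locally (b m))) /\
  (forall m, 0 < m < xbar ->
     is_derive b m (Efun f F psi phi mu r U (b m) m) /\ continuous (Derive b) m) /\
  b 0 = x0.

Definition is_first_fixed_point (b : R -> R) (xbar mbar : R) : Prop :=
  0 <= mbar <= xbar /\ b mbar = mbar /\
  (forall m, 0 <= m <= xbar -> b m = m -> mbar <= m).

(* Main.v *)
Require Import Defs.
From Stdlib Require Import Reals Lra.
From Coquelicot Require Import Coquelicot.
Open Scope R_scope.


Lemma deriv_pos_local (f : R -> R) x l :
  is_derive f x l -> 0 < l ->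
  exists d, 0 < d /\ forall h, 0 < h < d -> f (x - h) < f x /\ f x < f (x + h).
Proof.
  intros Hd Hl. apply is_derive_Reals in Hd.
  destruct (Hd (l/2) ltac:(lra)) as [[d Hdp] Hd'].
  exists d. split; [exact Hdp|]. intros h Hh.
  assert (A1 := Hd' h ltac:(lra) ltac:(simpl; rewrite Rabs_right; lra)).
  assert (A2 := Hd' (-h) ltac:(lra) ltac:(simpl; rewrite Rabs_left; lra)).
  apply Rabs_def2 in A1. apply Rabs_def2 in A2.
  replace (x + - h) with (x - h) in A2 by ring.
  destruct A1 as [_ A1]. destruct A2 as [_ A2].
  split.
  - assert (0 < (f (x - h) - f x) / - h) by lra.
    assert (0 < (f x - f (x-h)) / h).
    { replace ((f x - f (x-h)) / h) with ((f (x - h) - f x) / - h) by (field; repeat split; lra). lra. }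
    assert (0 < (f x - f (x-h))).
    { replace (f x - f (x-h)) with (((f x - f (x-h)) / h) * h) by (field; repeat split; lra). nra. }
    lra.
  - assert (0 < (f (x + h) - f x) / h) by lra.
    assert (0 < (f (x + h) - f x)).
    { replace (f (x+h) - f x) with (((f (x + h) - f x) / h) * h) by (field; repeat split; lra). nra. }
    lra.
Qed.

Lemma deriv_neg_local (f : R -> R) x l :
  is_derive f x l -> l < 0 ->
  exists d, 0 < d /\ forall h, 0 < h < d -> f x < f (x - h) /\ f (x + h) < f x.
Proof.
  intros Hd Hl.
  assert (Hd2 : is_derive (fun t => - f t) x (- l)).
  { apply (is_derive_opp f x l). exact Hd. }
  destruct (deriv_pos_local _ _ _ Hd2 ltac:(lra)) as [d [Hd0 H]].
  exists d; split; auto. intros h Hh. specialize (H h Hh). lra.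
Qed.

Lemma interior_min (f f1 f2 : R -> R) a b p :
  a < p < b ->
  (forall x, a < x < b -> is_derive f x (f1 x)) ->
  is_derive f1 p (f2 p) ->
  (forall x, a < x < b -> f p <= f x) ->
  f1 p = 0 /\ 0 <= f2 p.
Proof.
  intros Hp Hder Hder2 Hmin.
  assert (E1 : f1 p = 0).
  { destruct (Rtotal_order (f1 p) 0) as [Hlt|[Heq|Hgt]]; auto.
    - destruct (deriv_neg_local f p _ (Hder p Hp) Hlt) as [d [Hd H]].
      set (h := Rmin (d/2) ((b - p)/2)).
      assert (0 < h < d) by (unfold h; apply Rmin_case_strong; intros; lra).
      assert (h <= (b-p)/2) by (unfold h; apply Rmin_r).
      destruct (H h ltac:(lra)) as [_ H2].
      specialize (Hmin (p + h) ltac:(lra)). lra.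
    - destruct (deriv_pos_local f p _ (Hder p Hp) Hgt) as [d [Hd H]].
      set (h := Rmin (d/2) ((p - a)/2)).
      assert (0 < h < d) by (unfold h; apply Rmin_case_strong; intros; lra).
      assert (h <= (p-a)/2) by (unfold h; apply Rmin_r).
      destruct (H h ltac:(lra)) as [H2 _].
      specialize (Hmin (p - h) ltac:(lra)). lra. }
  split; auto.
  destruct (Rle_or_lt 0 (f2 p)) as [?|Hlt]; auto.
  exfalso.
  destruct (deriv_neg_local f1 p _ Hder2 Hlt) as [d [Hd H]].
  set (h := Rmin (d/2) ((p - a)/2)).
  assert (0 < h < d) by (unfold h; apply Rmin_case_strong; intros; lra).
  assert (h <= (p-a)/2) by (unfold h; apply Rmin_r).
  destruct (MVT_cor2 f f1 (p - h) p ltac:(lra)) as [xi [Hxi1 Hxi2]].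
  { intros c0 Hc0. apply is_derive_Reals. apply Hder. lra. }
  destruct (H (p - xi) ltac:(lra)) as [H3 _].
  replace (p - (p - xi)) with xi in H3 by ring. rewrite E1 in H3.
  specialize (Hmin (p - h) ltac:(lra)).
  assert (0 < f1 xi * (p - (p - h))) by (apply Rmult_lt_0_compat; lra).
  lra.
Qed.

Lemma within_eps (g : R -> R) (D : R -> Prop) m :
  filterlim g (within D (locally m)) (locally (g m)) ->
  forall e, 0 < e -> exists d, 0 < d /\
    forall x, D x -> Rabs (x - m) < d -> Rabs (g x - g m) < e.
Proof.
  intros H e He.
  specialize (H (ball (g m) e) (locally_ball (g m) (mkposreal e He))).
  destruct H as [[d Hd] H]. exists d. split; [exact Hd|].
  intros x Dx Hx. apply (H x); auto.
Qed.

Definition clamp (a b x : R) : R := Rmax a (Rmin x b).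

Lemma clamp_in a b x : a <= b -> a <= clamp a b x <= b.
Proof. intros. unfold clamp, Rmax, Rmin; repeat destruct Rle_dec; lra. Qed.

Lemma clamp_id a b x : a <= x <= b -> clamp a b x = x.
Proof. intros. unfold clamp, Rmax, Rmin; repeat destruct Rle_dec; lra. Qed.

Lemma clamp_lip a b x y : Rabs (clamp a b x - clamp a b y) <= Rabs (x - y).
Proof. unfold clamp, Rmax, Rmin; repeat destruct Rle_dec; unfold Rabs; repeat destruct Rcase_abs; lra. Qed.

Lemma clamp_cont (g : R -> R) a b :
  a <= b ->
  (forall m, a <= m <= b -> filterlim g (within (fun y => a <= y <= b) (locally m)) (locally (g m))) ->
  forall x, continuity_pt (fun t => g (clamp a b t)) x.
Proof.
  intros Hab Hc x. intros e He.
  destruct (within_eps g _ _ (Hc (clamp a b x) (clamp_in a b x Hab)) e He) as [d [Hd H]].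
  exists d. split; auto. intros t [_ Ht]. unfold R_dist in *. simpl in *. unfold R_dist in *.
  apply H. apply clamp_in; auto.
  eapply Rle_lt_trans. apply clamp_lip. exact Ht.
Qed.

Lemma bounded_abs (f : R -> R) a b :
  a <= b -> (forall x, a <= x <= b -> continuity_pt f x) ->
  exists M, forall x, a <= x <= b -> Rabs (f x) <= M.
Proof.
  intros Hab Hc.
  destruct (continuity_ab_maj f a b Hab Hc) as [x1 [H1 _]].
  destruct (continuity_ab_min f a b Hab Hc) as [x2 [H2 _]].
  exists (Rmax (f x1) (- f x2)). intros x Hx. specialize (H1 x Hx). specialize (H2 x Hx).
  unfold Rabs, Rmax; repeat destruct Rcase_abs; repeat destruct Rle_dec; lra.
Qed.

Lemma inI_up alpha t z : inI alpha t -> t <= z -> inI alpha z.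
Proof. unfold inI. destruct alpha as [a| |]; simpl; auto; lra. Qed.

Lemma inI_left alpha x : inI alpha x -> exists d, 0 < d /\ forall y, x - d < y -> inI alpha y.
Proof.
  unfold inI. destruct alpha as [a| |]; simpl; intros H.
  - exists (x - a). split; [lra| intros; simpl; lra].
  - contradiction.
  - exists 1. split; [lra| intros; simpl; auto].
Qed.

Lemma inI_nonneg alpha x : Rbar_lt alpha 0 -> 0 <= x -> inI alpha x.
Proof. intros H Hx. apply (inI_up alpha 0); auto. Qed.

Lemma ode_second alpha mu sigma r u x :
  (forall x, inI alpha x -> 0 < sigma x) ->
  solves_ode alpha mu sigma r u -> inI alpha x ->
  is_derive u x (Derive u x) /\
  is_derive (Derive u) x (2 * (r * u x - mu x * Derive u x) / sigma x ^ 2).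
Proof.
  intros Hs Hode Hx. destruct (Hode x Hx) as [H1 [H2 H3]].
  split. apply Derive_correct; auto.
  replace (2 * (r * u x - mu x * Derive u x) / sigma x ^ 2) with (Derive (Derive u) x).
  apply Derive_correct; auto.
  specialize (Hs x Hx). field_simplify_eq; [|nra]. nra.
Qed.

Lemma psi_deriv_pos alpha mu sigma r psi :
  (forall x, inI alpha x -> 0 < sigma x) -> 0 < r ->
  is_psi alpha mu sigma r psi -> forall x, inI alpha x -> 0 < Derive psi x.
Proof.
  intros Hs Hr [Hode [Hpos Hinc]].
  assert (Hge : forall x, inI alpha x -> 0 <= Derive psi x).
  { intros x Hx. destruct (Rle_or_lt 0 (Derive psi x)) as [?|Hlt]; auto. exfalso.
    destruct (ode_second _ _ _ _ _ x Hs Hode Hx) as [D1 _].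
    destruct (deriv_neg_local psi x _ D1 Hlt) as [d [Hd H]].
    destruct (H (d/2) ltac:(lra)) as [_ H2].
    assert (psi x < psi (x + d/2)). { apply Hinc; auto. apply (inI_up _ x); auto; lra. lra. }
    lra. }
  intros x Hx. destruct (Rle_lt_or_eq_dec _ _ (Hge x Hx)) as [?|Heq]; auto. exfalso.
  destruct (ode_second _ _ _ _ _ x Hs Hode Hx) as [_ D2].
  assert (Hp : 0 < 2 * (r * psi x - mu x * Derive psi x) / sigma x ^ 2).
  { rewrite <- Heq. specialize (Hs x Hx). specialize (Hpos x Hx).
    apply Rdiv_lt_0_compat; nra. }
  destruct (deriv_pos_local _ x _ D2 Hp) as [d [Hd H]].
  destruct (inI_left alpha x Hx) as [d2 [Hd2 Hl]].
  set (h := Rmin (d/2) (d2/2)).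
  assert (0 < h < d) by (unfold h; apply Rmin_case_strong; intros; lra).
  assert (h <= d2/2) by (unfold h; apply Rmin_r).
  destruct (H h ltac:(lra)) as [Hh1 _].
  specialize (Hge (x - h) (Hl (x - h) ltac:(lra))). lra.
Qed.

Lemma phi_deriv_neg alpha mu sigma r phi :
  (forall x, inI alpha x -> 0 < sigma x) -> 0 < r ->
  is_phi alpha mu sigma r phi -> forall x, inI alpha x -> Derive phi x < 0.
Proof.
  intros Hs Hr [Hode [Hpos Hdec]].
  assert (Hle : forall x, inI alpha x -> Derive phi x <= 0).
  { intros x Hx. destruct (Rle_or_lt (Derive phi x) 0) as [?|Hlt]; auto. exfalso.
    destruct (ode_second _ _ _ _ _ x Hs Hode Hx) as [D1 _].
    destruct (deriv_pos_local phi x _ D1 Hlt) as [d [Hd H]].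
    destruct (H (d/2) ltac:(lra)) as [_ H2].
    assert (phi (x + d/2) < phi x). { apply Hdec; auto. apply (inI_up _ x); auto; lra. lra. }
    lra. }
  intros x Hx. destruct (Rle_lt_or_eq_dec _ _ (Hle x Hx)) as [?|Heq]; auto. exfalso.
  destruct (ode_second _ _ _ _ _ x Hs Hode Hx) as [_ D2].
  assert (Hp : 0 < 2 * (r * phi x - mu x * Derive phi x) / sigma x ^ 2).
  { rewrite Heq. specialize (Hs x Hx). specialize (Hpos x Hx).
    apply Rdiv_lt_0_compat; nra. }
  destruct (deriv_pos_local _ x _ D2 Hp) as [d [Hd H]].
  destruct (H (d/2) ltac:(lra)) as [_ Hh1].
  specialize (Hle (x + d/2) (inI_up _ x (x + d/2) Hx ltac:(lra))). lra.
Qed.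

Definition qf (mu sigma : R -> R) x := 2 * mu x / sigma x ^ 2.

Lemma N_deriv alpha mu sigma r psi phi U m x :
  (forall x, inI alpha x -> 0 < sigma x) -> 0 < r ->
  (forall x, inI alpha x -> ex_derive mu x) ->
  solves_ode alpha mu sigma r psi -> solves_ode alpha mu sigma r phi ->
  inI alpha x ->
  is_derive (fun t => Nfun psi phi mu r U t m) x
    (- Gfun mu r x * Dfun psi phi x m - qf mu sigma x * Nfun psi phi mu r U x m).
Proof.
  intros Hs Hr Hmu Hpsi Hphi Hx.
  destruct (ode_second _ _ _ _ _ x Hs Hpsi Hx) as [P1 P2].
  destruct (ode_second _ _ _ _ _ x Hs Hphi Hx) as [F1 F2].
  assert (Hm := Hmu x Hx).
  unfold Nfun, Dfun, Gfun, qf.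
  auto_derive.
  - repeat split; try (eexists; eassumption); auto.
    change (Derive (fun x0 => psi x0) x) with (Derive psi x).
    change (Derive (fun x0 => phi x0) x) with (Derive phi x).
    change (Derive (fun x0 => mu x0) x) with (Derive mu x).
    change (Derive (fun x0 => Derive psi x0) x) with (Derive (Derive psi) x).
    change (Derive (fun x0 => Derive phi x0) x) with (Derive (Derive phi) x).
    rewrite (is_derive_unique _ _ _ P2). rewrite (is_derive_unique _ _ _ F2).
    specialize (Hs x Hx). field. split; lra.
Qed.

Lemma qf_cont alpha mu sigma z :
  (forall x, inI alpha x -> 0 < sigma x) ->
  (forall x, inI alpha x -> ex_derive mu x /\ ex_derive sigma x) ->
  inI alpha z -> continuous (qf mu sigma) z.
Proof.
  intros Hs Hd Hz. apply (ex_derive_continuous (K := R_AbsRing) (V := R_NormedModule) (qf mu sigma)). unfold qf.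
  destruct (Hd z Hz). specialize (Hs z Hz).
  auto_derive. repeat split; auto. nra.
Qed.

Lemma RInt_q_deriv alpha mu sigma x :
  Rbar_lt alpha 0 ->
  (forall x, inI alpha x -> 0 < sigma x) ->
  (forall x, inI alpha x -> ex_derive mu x /\ ex_derive sigma x) ->
  inI alpha x -> is_derive (fun t => RInt (qf mu sigma) 0 t) x (qf mu sigma x).
Proof.
  intros Ha Hs Hd Hx.
  apply (is_derive_RInt (V := R_CompleteNormedModule) (qf mu sigma) (fun t => RInt (qf mu sigma) 0 t) 0 x).
  - destruct (inI_left alpha x Hx) as [d [Hd0 Hl]].
    exists (mkposreal d Hd0). intros t Ht. change (Rabs (t - x) < d) in Ht.
    apply (RInt_correct (V := R_CompleteNormedModule)). apply ex_RInt_continuous. intros z Hz.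
    apply (qf_cont alpha); auto.
    assert (Ht' : inI alpha t). { apply Hl. apply Rabs_def2 in Ht. lra. }
    revert Hz. apply Rmin_case; intros Hz.
    + apply inI_nonneg; auto; lra.
    + apply (inI_up alpha t); auto; lra.
  - apply (qf_cont alpha); auto.
Qed.

Lemma N_sign alpha mu sigma r psi phi U m :
  diffusion_assumptions alpha mu sigma -> 0 < r -> a_assumptions mu r U ->
  is_psi alpha mu sigma r psi -> is_phi alpha mu sigma r phi ->
  0 <= m ->
  forall x0 x, 0 <= x0 -> 0 <= x -> Nfun psi phi mu r U x0 m = 0 ->
  (x0 < x -> Nfun psi phi mu r U x m < 0) /\ (x < x0 -> 0 < Nfun psi phi mu r U x m).
Proof.
  intros HD Hr Ha Hpsi Hphi Hm0.
  destruct HD as [Ha0 [_ [_ [Hs [_ [_ [Hd _]]]]]]].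
  destruct Ha as [_ [k [Hk Hkb]]].
  assert (HmI : inI alpha m) by (apply inI_nonneg; auto).
  set (S := fun t => exp (RInt (qf mu sigma) 0 t)).
  set (g := fun t => Nfun psi phi mu r U t m).
  set (h := fun t => g t * S t).
  set (dh := fun t => - Gfun mu r t * Dfun psi phi t m * S t).
  assert (Hder : forall t, 0 <= t -> is_derive h t (dh t)).
  { intros t Ht. assert (HtI : inI alpha t) by (apply inI_nonneg; auto).
    assert (D1 := N_deriv alpha mu sigma r psi phi U m t Hs Hr
                   (fun x Hx => proj1 (Hd x Hx)) (proj1 Hpsi) (proj1 Hphi) HtI).
    assert (D2 : is_derive S t (qf mu sigma t * S t)).
    { unfold S. apply (is_derive_comp exp (fun t => RInt (qf mu sigma) 0 t)).
      apply is_derive_exp. apply (RInt_q_deriv alpha); auto. }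
    unfold h, dh. eapply is_derive_ext. { intros; reflexivity. }
    replace (- Gfun mu r t * Dfun psi phi t m * S t) with
      (plus (mult (- Gfun mu r t * Dfun psi phi t m - qf mu sigma t * Nfun psi phi mu r U t m) (S t))
            (mult (g t) (qf mu sigma t * S t))).
    2:{ unfold g; simpl. unfold plus, mult; simpl. ring. }
    exact (is_derive_mult (K := R_AbsRing) g S t _ _ D1 D2 (fun a b => Rmult_comm a b)). }
  assert (Hneg : forall t, 0 <= t -> dh t < 0).
  { intros t Ht. assert (HtI : inI alpha t) by (apply inI_nonneg; auto).
    unfold dh, Gfun, Dfun.
    assert (0 < S t) by apply exp_pos.
    assert (0 < 1 - Derive mu t / r).
    { specialize (Hkb t Ht). assert (Derive mu t / r < 1); [|lra].
      apply (Rmult_lt_reg_r r); auto. field_simplify; lra. }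
    assert (0 < Derive psi t) by (apply (psi_deriv_pos alpha mu sigma r); auto).
    assert (Derive phi t < 0) by (apply (phi_deriv_neg alpha mu sigma r); auto).
    assert (0 < psi m) by (apply (proj1 (proj2 Hpsi)); auto).
    assert (0 < phi m) by (apply (proj1 (proj2 Hphi)); auto).
    assert (0 < Derive psi t * phi m - Derive phi t * psi m) by nra.
    assert (0 < (1 - Derive mu t / r) * (Derive psi t * phi m - Derive phi t * psi m)) by nra.
    nra. }
  assert (Hdec : forall x1 x2, 0 <= x1 -> x1 < x2 -> h x2 < h x1).
  { intros x1 x2 H1 H2.
    destruct (MVT_cor2 h dh x1 x2 H2) as [xi [E Hxi]].
    { intros c0 Hc0. apply is_derive_Reals. apply Hder. lra. }
    assert (dh xi * (x2 - x1) < 0).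
    { assert (dh xi < 0) by (apply Hneg; lra). nra. }
    lra. }
  intros x0 x Hx0 Hx Hz.
  assert (Hh0 : h x0 = 0) by (unfold h, g; rewrite Hz; ring).
  assert (HS : 0 < S x) by apply exp_pos.
  split; intros Hlt.
  - specialize (Hdec x0 x Hx0 Hlt). rewrite Hh0 in Hdec. unfold h in Hdec.
    fold (g x). destruct (Rle_or_lt 0 (g x)) as [Hp|]; auto. nra.
  - specialize (Hdec x x0 Hx Hlt). rewrite Hh0 in Hdec. unfold h in Hdec.
    fold (g x). destruct (Rle_or_lt (g x) 0) as [Hp|]; auto. nra.
Qed.

Lemma deriv_cont f x l : is_derive f x l -> continuity_pt f x.
Proof.
  intros H. apply derivable_continuous_pt. exists l. apply is_derive_Reals. exact H.
Qed.

Lemma N_neg_on alpha mu sigma r U U1 U2 ustar xbar psi phi y c :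
  diffusion_assumptions alpha mu sigma -> 0 < r ->
  U_assumptions mu sigma r U U1 U2 ustar ->
  is_xbar mu r U xbar ->
  is_psi alpha mu sigma r psi -> is_phi alpha mu sigma r phi ->
  0 < c < y -> y < ustar -> y < xbar ->
  Nfun psi phi mu r U y 0 < 0 -> Nfun psi phi mu r U y c < 0 ->
  forall m, 0 <= m <= c -> Nfun psi phi mu r U y m < 0.
Proof.
  intros HD Hr HU Hx Hpsi Hphi Hcy Hyu Hyx H0 Hc.
  assert (HD' := HD).
  destruct HD' as [Ha0 [_ [_ [Hs [_ [_ [Hd _]]]]]]].
  destruct HU as [_ [_ [_ [HUd [_ [_ [_ [_ [_ HLU]]]]]]]]].
  destruct Hx as [_ [Hxp _]].
  assert (HyI : inI alpha y) by (apply inI_nonneg; auto; lra).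
  assert (Wpos : 0 < Derive psi y * phi y - Derive phi y * psi y).
  { assert (0 < Derive psi y) by (apply (psi_deriv_pos alpha mu sigma r); auto).
    assert (Derive phi y < 0) by (apply (phi_deriv_neg alpha mu sigma r); auto).
    assert (0 < psi y) by (apply (proj1 (proj2 Hpsi)); auto).
    assert (0 < phi y) by (apply (proj1 (proj2 Hphi)); auto). nra. }
  set (W := Derive psi y * phi y - Derive phi y * psi y).
  set (n := fun m => Nfun psi phi mu r U y m).
  set (n1 := fun m => phi y * Derive psi m - psi y * Derive phi m
            + (Derive psi y * Derive phi m - Derive phi y * Derive psi m) * (mu y / r)
            - W * U1 m).
  set (n2 := fun m => phi y * (2 * (r * psi m - mu m * Derive psi m) / sigma m ^ 2)
            - psi y * (2 * (r * phi m - mu m * Derive phi m) / sigma m ^ 2)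
            + (Derive psi y * (2 * (r * phi m - mu m * Derive phi m) / sigma m ^ 2)
               - Derive phi y * (2 * (r * psi m - mu m * Derive psi m) / sigma m ^ 2)) * (mu y / r)
            - W * U2 m).
  assert (Dn : forall m, 0 < m -> is_derive n m (n1 m)).
  { intros m Hm. assert (HmI : inI alpha m) by (apply inI_nonneg; auto; lra).
    destruct (ode_second _ _ _ _ _ m Hs (proj1 Hpsi) HmI) as [P1 P2].
    destruct (ode_second _ _ _ _ _ m Hs (proj1 Hphi) HmI) as [F1 F2].
    destruct (HUd m Hm) as [U1d U2d].
    unfold n, n1, Nfun, Dfun. fold W.
    auto_derive.
    - repeat split; eexists; eassumption.
    - change (Derive (fun x0 => psi x0) m) with (Derive psi m).
      change (Derive (fun x0 => phi x0) m) with (Derive phi m).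
      change (Derive (fun x0 => U x0) m) with (Derive U m).
      rewrite (is_derive_unique _ _ _ U1d). ring. }
  assert (Dn1 : forall m, 0 < m -> is_derive n1 m (n2 m)).
  { intros m Hm. assert (HmI : inI alpha m) by (apply inI_nonneg; auto; lra).
    destruct (ode_second _ _ _ _ _ m Hs (proj1 Hpsi) HmI) as [P1 P2].
    destruct (ode_second _ _ _ _ _ m Hs (proj1 Hphi) HmI) as [F1 F2].
    destruct (HUd m Hm) as [U1d U2d].
    unfold n1, n2.
    auto_derive.
    - repeat split; eexists; eassumption.
    - change (Derive (fun x0 => Derive psi x0) m) with (Derive (Derive psi) m).
      change (Derive (fun x0 => Derive phi x0) m) with (Derive (Derive phi) m).
      change (Derive (fun x0 => U1 x0) m) with (Derive U1 m).
      rewrite (is_derive_unique _ _ _ U2d), (is_derive_unique _ _ _ P2), (is_derive_unique _ _ _ F2).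
      ring. }
  assert (HL : forall m, 0 < m < ustar ->
     / 2 * sigma m ^ 2 * n2 m + mu m * n1 m - r * n m < 0).
  { intros m Hm. assert (HmI : inI alpha m) by (apply inI_nonneg; auto; lra).
    specialize (HLU m ltac:(lra)). specialize (Hs m HmI).
    replace (/ 2 * sigma m ^ 2 * n2 m + mu m * n1 m - r * n m) with
      (- W * (mu m * U1 m + / 2 * sigma m ^ 2 * U2 m - r * U m)).
    2:{ unfold n, n1, n2, Nfun, Dfun. fold W. field. split; lra. }
    assert (0 < W * (mu m * U1 m + / 2 * sigma m ^ 2 * U2 m - r * U m)).
    { apply Rmult_lt_0_compat; auto. }
    lra. }
  assert (Hny : 0 < n y).
  { unfold n, Nfun, Dfun. fold W.
    replace (phi y * psi y - psi y * phi y + W * (mu y / r) - W * U y) with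
      (W * ((mu y - r * U y) / r)) by (field; lra).
    specialize (Hxp y ltac:(lra)).
    apply Rmult_lt_0_compat; auto. apply Rdiv_lt_0_compat; lra. }
  intros m1 Hm1. destruct (Rlt_or_le (n m1) 0) as [?|Hge]; auto. exfalso.
  assert (Hm1p : 0 < m1).
  { destruct (Req_dec m1 0) as [E|]; [|lra]. subst m1. unfold n in Hge. lra. }
  assert (Hm1c : m1 < c).
  { destruct (Req_dec m1 c) as [E|]; [|lra]. subst m1. unfold n in Hge. lra. }
  destruct (continuity_ab_min n m1 y ltac:(lra)) as [p [Hpmin Hp]].
  { intros z Hz. apply (deriv_cont _ _ _ (Dn z ltac:(lra))). }
  assert (Hnp : n p < 0).
  { specialize (Hpmin c ltac:(lra)). unfold n at 2 in Hpmin. lra. }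
  assert (Hp1 : m1 < p) by (destruct (Req_dec p m1) as [E|]; [rewrite E in Hnp; lra| lra]).
  assert (Hp2 : p < y) by (destruct (Req_dec p y) as [E|]; [rewrite E in Hnp; lra| lra]).
  destruct (interior_min n n1 n2 m1 y p ltac:(lra)) as [E1 E2].
  { intros z Hz. apply Dn. lra. }
  { apply Dn1. lra. }
  { intros z Hz. apply Hpmin. lra. }
  specialize (HL p ltac:(lra)). rewrite E1 in HL.
  assert (0 <= / 2 * sigma p ^ 2 * n2 p).
  { apply Rmult_le_pos; auto. apply Rmult_le_pos; [lra| apply pow2_ge_0]. }
  nra.
Qed.

Section Feps.
Variables c xbar eps : R.
Hypothesis Hc : 0 < c < xbar.
Hypothesis He : 0 < eps.
Hypothesis He1 : eps <= c / 2.
Hypothesis He2 : eps < xbar - c.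
Hypothesis He3 : eps * xbar <= 1 / 2.
Hypothesis He4 : eps * c < 1 / 2.

Let d := d_eps c xbar eps.

Lemma d_bound : 1 / 2 <= d * c /\ 0 < d.
Proof.
  assert (Hden : 0 < c - eps / 2) by lra.
  assert (HN : 1 / 2 <= 1 - eps * (xbar - c - eps / 2)) by nra.
  assert (Hd : d * (c - eps / 2) = 1 - eps * (xbar - c - eps / 2)).
  { unfold d, d_eps. field. lra. }
  assert (0 < d).
  { destruct (Rle_or_lt d 0); auto. nra. }
  split; auto. nra.
Qed.

Lemma eps_lt_d : eps < d.
Proof. destruct d_bound. nra. Qed.

Let s := 1 - d / eps.
Definition gfun (x : R) := clamp eps d (s * (x - c) + eps).

Lemma s_neg : s < 0.
Proof.
  unfold s. assert (1 < d / eps); [|lra].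
  assert (H := eps_lt_d). apply (Rmult_lt_reg_r eps); auto. field_simplify; lra.
Qed.

Lemma s_eps : s * eps = eps - d.
Proof. unfold s. field. lra. Qed.

Lemma f_eq_g x : 0 <= x <= xbar -> f_eps c xbar eps x = gfun x.
Proof.
  intros Hx. assert (Hs := s_neg). assert (Hse := s_eps). assert (Hed := eps_lt_d).
  unfold f_eps, gfun, clamp. fold d.
  destruct (Rlt_dec x 0); [lra|].
  destruct (Rle_dec x (c - eps)).
  { assert (d <= s * (x - c) + eps) by nra.
    rewrite Rmin_right; [|lra]. rewrite Rmax_right; lra. }
  destruct (Rle_dec x c).
  { assert (s * (x - c) + eps <= d) by nra.
    assert (eps <= s * (x - c) + eps) by nra.
    rewrite Rmin_left; [|lra]. rewrite Rmax_right; [|lra].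
    fold s. replace (c * (d / eps - 1)) with (- s * c) by (unfold s; ring). ring. }
  destruct (Rle_dec x xbar); [|lra].
  assert (s * (x - c) + eps <= eps) by nra.
  rewrite Rmin_left; [|lra]. rewrite Rmax_left; lra.
Qed.

Lemma gfun_cont x : continuous gfun x.
Proof.
  apply continuity_pt_filterlim. intros e Hep.
  assert (Hs := s_neg).
  exists (e / (- s)). split. { apply Rdiv_lt_0_compat; lra. }
  intros t [_ Ht]. simpl in *. unfold R_dist in *. unfold gfun.
  eapply Rle_lt_trans. apply clamp_lip.
  replace (s * (t - c) + eps - (s * (x - c) + eps)) with (s * (t - x)) by ring.
  rewrite Rabs_mult. rewrite (Rabs_left s); auto.
  apply (Rmult_lt_compat_l (- s)) in Ht; [|lra].
  replace (- s * (e / - s)) with e in Ht by (field; lra). lra.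
Qed.

Lemma f_ex_RInt a b : 0 <= a <= b -> b <= xbar -> ex_RInt (f_eps c xbar eps) a b.
Proof.
  intros Ha Hb. apply (ex_RInt_ext gfun).
  { intros x Hx. rewrite Rmin_left in Hx by lra. rewrite Rmax_right in Hx by lra.
    symmetry. apply f_eq_g. lra. }
  apply (ex_RInt_continuous (V := R_CompleteNormedModule)). intros; apply gfun_cont.
Qed.

Lemma f_ge_eps x : 0 <= x <= xbar -> eps <= f_eps c xbar eps x.
Proof.
  intros Hx. rewrite f_eq_g; auto. unfold gfun. apply clamp_in. assert (H := eps_lt_d). lra.
Qed.

Lemma f_right x : c < x <= xbar -> f_eps c xbar eps x = eps.
Proof.
  intros Hx. unfold f_eps. destruct (Rlt_dec x 0); [lra|].
  destruct (Rle_dec x (c - eps)); [lra|]. destruct (Rle_dec x c); [lra|].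
  destruct (Rle_dec x xbar); lra.
Qed.

Lemma F_ge_lin m : 0 <= m <= xbar -> eps * m <= F_eps c xbar eps m.
Proof.
  intros Hm. unfold F_eps.
  assert (RInt (fun _ => eps) 0 m <= RInt (f_eps c xbar eps) 0 m).
  { apply RInt_le; try lra.
    - apply ex_RInt_const.
    - apply f_ex_RInt; lra.
    - intros x Hx. apply f_ge_eps; lra. }
  rewrite RInt_const in H. change (scal (m - 0) eps) with ((m - 0) * eps) in H. lra.
Qed.

Lemma F_ge_quarter m : c <= m <= xbar -> 1 / 4 <= F_eps c xbar eps m.
Proof.
  intros Hm. unfold F_eps.
  rewrite <- (RInt_Chasles (f_eps c xbar eps) 0 (c - eps) m).
  2:{ apply f_ex_RInt; lra. }
  2:{ apply f_ex_RInt; lra. }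
  assert (H1 : RInt (fun _ => d) 0 (c - eps) <= RInt (f_eps c xbar eps) 0 (c - eps)).
  { apply RInt_le; try lra.
    - apply ex_RInt_const.
    - apply f_ex_RInt; lra.
    - intros x Hx. unfold f_eps. fold d. destruct (Rlt_dec x 0); [lra|].
      destruct (Rle_dec x (c - eps)); lra. }
  assert (H2 : 0 <= RInt (f_eps c xbar eps) (c - eps) m).
  { apply RInt_ge_0; try lra. apply f_ex_RInt; lra.
    intros x Hx. assert (H := f_ge_eps x ltac:(lra)). lra. }
  rewrite RInt_const in H1. change (scal (c - eps - 0) d) with ((c - eps - 0) * d) in H1.
  destruct d_bound as [Hdc Hd0].
  simpl. unfold plus; simpl.
  assert (1/4 <= (c - eps - 0) * d) by nra. lra.
Qed.

End Feps.

Lemma abs_mul_le a b A B : Rabs a <= A -> Rabs b <= B -> Rabs (a * b) <= A * B.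
Proof.
  intros. rewrite Rabs_mult. apply Rmult_le_compat; auto; apply Rabs_pos.
Qed.

Lemma abs4 a b c e : Rabs (a - b + c - e) <= Rabs a + Rabs b + Rabs c + Rabs e.
Proof. unfold Rabs; repeat destruct Rcase_abs; lra. Qed.

Lemma abs2 a b : Rabs (a - b) <= Rabs a + Rabs b.
Proof. unfold Rabs; repeat destruct Rcase_abs; lra. Qed.

Lemma NDG_bound alpha mu sigma r U U1 U2 ustar psi phi xbar :
  diffusion_assumptions alpha mu sigma -> 0 < r -> a_assumptions mu r U ->
  U_assumptions mu sigma r U U1 U2 ustar ->
  is_psi alpha mu sigma r psi -> is_phi alpha mu sigma r phi -> 0 < xbar ->
  exists K, 0 <= K /\ forall x m, 0 <= x <= xbar -> 0 <= m <= xbar ->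
    0 < Dfun psi phi x m * Gfun mu r x /\
    Rabs (Nfun psi phi mu r U x m) <= K * (Dfun psi phi x m * Gfun mu r x).
Proof.
  intros HD Hr Ha HU Hpsi Hphi Hx.
  assert (HD' := HD).
  destruct HD' as [Ha0 [_ [_ [Hs [_ [_ [Hd _]]]]]]].
  destruct Ha as [_ [k [Hk Hkb]]].
  destruct HU as [HU0 [HUm _]].
  assert (HI : forall z, 0 <= z -> inI alpha z) by (intros; apply inI_nonneg; auto).
  assert (Cpsi : forall z, 0 <= z <= xbar -> continuity_pt psi z).
  { intros z Hz. destruct (ode_second _ _ _ _ _ z Hs (proj1 Hpsi) (HI z ltac:(lra))) as [P1 _].
    exact (deriv_cont _ _ _ P1). }
  assert (Cphi : forall z, 0 <= z <= xbar -> continuity_pt phi z).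
  { intros z Hz. destruct (ode_second _ _ _ _ _ z Hs (proj1 Hphi) (HI z ltac:(lra))) as [P1 _].
    exact (deriv_cont _ _ _ P1). }
  assert (Cpsi' : forall z, 0 <= z <= xbar -> continuity_pt (Derive psi) z).
  { intros z Hz. destruct (ode_second _ _ _ _ _ z Hs (proj1 Hpsi) (HI z ltac:(lra))) as [_ P2].
    exact (deriv_cont _ _ _ P2). }
  assert (Cphi' : forall z, 0 <= z <= xbar -> continuity_pt (Derive phi) z).
  { intros z Hz. destruct (ode_second _ _ _ _ _ z Hs (proj1 Hphi) (HI z ltac:(lra))) as [_ P2].
    exact (deriv_cont _ _ _ P2). }
  assert (Cmu : forall z, 0 <= z <= xbar -> continuity_pt mu z).
  { intros z Hz. destruct (Hd z (HI z ltac:(lra))) as [Hm _].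
    exact (deriv_cont _ _ _ (Derive_correct _ _ Hm)). }
  destruct (bounded_abs psi 0 xbar ltac:(lra) Cpsi) as [Mpsi Hpsi_b].
  destruct (bounded_abs phi 0 xbar ltac:(lra) Cphi) as [Mphi Hphi_b].
  destruct (bounded_abs (Derive psi) 0 xbar ltac:(lra) Cpsi') as [Mpsi' Hpsi'_b].
  destruct (bounded_abs (Derive phi) 0 xbar ltac:(lra) Cphi') as [Mphi' Hphi'_b].
  destruct (bounded_abs mu 0 xbar ltac:(lra) Cmu) as [Mmu Hmu_b].
  destruct (continuity_ab_min (Derive psi) 0 xbar ltac:(lra) Cpsi') as [p1 [Hp1 Hp1r]].
  set (a1 := Derive psi p1).
  assert (Ha1 : 0 < a1) by (apply (psi_deriv_pos alpha mu sigma r); auto; apply HI; lra).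
  assert (Hphx : 0 < phi xbar) by (apply (proj1 (proj2 Hphi)); apply HI; lra).
  set (g0 := 1 - k / r).
  assert (Hg0 : 0 < g0).
  { unfold g0. assert (k / r < 1); [|lra]. apply (Rmult_lt_reg_r r); auto. field_simplify; lra. }
  set (UX := U xbar).
  set (MD := Mpsi' * Mphi + Mphi' * Mpsi).
  set (K1 := Mphi * Mpsi + Mpsi * Mphi + MD * (Mmu / r) + MD * UX).
  assert (HM0 : 0 <= Mpsi /\ 0 <= Mphi /\ 0 <= Mpsi' /\ 0 <= Mphi' /\ 0 <= Mmu).
  { repeat split.
    - eapply Rle_trans; [apply Rabs_pos| apply (Hpsi_b 0); lra].
    - eapply Rle_trans; [apply Rabs_pos| apply (Hphi_b 0); lra].
    - eapply Rle_trans; [apply Rabs_pos| apply (Hpsi'_b 0); lra].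
    - eapply Rle_trans; [apply Rabs_pos| apply (Hphi'_b 0); lra].
    - eapply Rle_trans; [apply Rabs_pos| apply (Hmu_b 0); lra]. }
  assert (HUX : 0 <= UX) by (apply HU0; lra).
  assert (HK1 : 0 <= K1).
  { unfold K1, MD. destruct HM0 as [? [? [? [? ?]]]].
    assert (0 <= Mmu / r) by (apply Rdiv_le_0_compat; lra).
    repeat apply Rplus_le_le_0_compat; apply Rmult_le_pos; auto;
      try apply Rplus_le_le_0_compat; apply Rmult_le_pos; auto. }
  exists (K1 / (a1 * phi xbar * g0)). split.
  { apply Rdiv_le_0_compat; auto. apply Rmult_lt_0_compat; auto. apply Rmult_lt_0_compat; auto. }
  intros x m Hx' Hm'.
  assert (HDlow : a1 * phi xbar <= Dfun psi phi x m).
  { unfold Dfun.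
    assert (a1 <= Derive psi x) by (apply Hp1; lra).
    assert (phi xbar <= phi m).
    { destruct (Req_dec m xbar) as [->|]; [lra|].
      left. apply (proj2 (proj2 Hphi)); try apply HI; lra. }
    assert (Derive phi x < 0) by (apply (phi_deriv_neg alpha mu sigma r); auto; apply HI; lra).
    assert (0 < psi m) by (apply (proj1 (proj2 Hpsi)); apply HI; lra).
    assert (a1 * phi xbar <= Derive psi x * phi m).
    { apply Rmult_le_compat; lra. }
    nra. }
  assert (HGlow : g0 <= Gfun mu r x).
  { unfold Gfun, g0. specialize (Hkb x ltac:(lra)).
    assert (Derive mu x / r <= k / r); [|lra].
    unfold Rdiv. apply Rmult_le_compat_r; auto. left. apply Rinv_0_lt_compat; auto. }
  assert (HDG : a1 * phi xbar * g0 <= Dfun psi phi x m * Gfun mu r x).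
  { apply Rmult_le_compat; auto.
    - apply Rmult_le_pos; lra.
    - lra. }
  split.
  { assert (0 < a1 * phi xbar * g0) by (apply Rmult_lt_0_compat; auto; apply Rmult_lt_0_compat; auto). lra. }
  assert (HN : Rabs (Nfun psi phi mu r U x m) <= K1).
  { unfold Nfun.
    eapply Rle_trans. apply abs4.
    assert (HDabs : forall z w, 0 <= z <= xbar -> 0 <= w <= xbar -> Rabs (Dfun psi phi z w) <= MD).
    { intros z w Hz Hw. unfold Dfun, MD. eapply Rle_trans. apply abs2.
      apply Rplus_le_compat; apply abs_mul_le; auto. }
    unfold K1.
    repeat apply Rplus_le_compat.
    - apply abs_mul_le; auto.
    - apply abs_mul_le; auto.
    - apply abs_mul_le; auto. unfold Rdiv. rewrite Rabs_mult.
      rewrite (Rabs_right (/ r)) by (left; apply Rinv_0_lt_compat; auto).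
      apply Rmult_le_compat_r; auto. left. apply Rinv_0_lt_compat; auto.
    - apply abs_mul_le; auto. rewrite Rabs_right by (apply Rle_ge, HU0; lra).
      apply HUm; lra. }
  assert (Hpos : 0 < a1 * phi xbar * g0) by (apply Rmult_lt_0_compat; auto; apply Rmult_lt_0_compat; auto).
  eapply Rle_trans. apply HN.
  replace K1 with (K1 / (a1 * phi xbar * g0) * (a1 * phi xbar * g0)) at 1 by (field; lra).
  apply Rmult_le_compat_l; auto. apply Rdiv_le_0_compat; auto.
Qed.

Lemma first_fixed (b : R -> R) xbar :
  0 < xbar ->
  (forall m, 0 <= m <= xbar -> filterlim b (within (fun y => 0 <= y <= xbar) (locally m)) (locally (b m))) ->
  0 < b 0 -> b xbar <= xbar ->
  exists mbar, is_first_fixed_point b xbar mbar.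
Proof.
  intros Hx Hc Hb0 Hbx.
  set (E := fun t => 0 <= t <= xbar /\ forall s, 0 <= s <= t -> b s > s).
  assert (HE0 : E 0).
  { split; [lra|]. intros s Hs. replace s with 0 by lra. lra. }
  assert (HEb : bound E). { exists xbar. intros t Ht. apply Ht. }
  destruct (completeness E HEb (ex_intro _ 0 HE0)) as [l [Hub Hlub]].
  assert (Hl0 : 0 <= l) by (apply Hub; exact HE0).
  assert (Hlx : l <= xbar) by (apply Hlub; intros t Ht; apply Ht).
  assert (Hbelow : forall s, 0 <= s < l -> b s > s).
  { intros s Hs. destruct (Rle_or_lt (b s) s) as [Hn|Hn]; auto.
    exfalso. assert (l <= s); [|lra].
    apply Hlub. intros t Ht. destruct (Rle_or_lt t s) as [?|Hts]; auto.
    destruct Ht as [_ Ht]. specialize (Ht s ltac:(lra)). lra. }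
  assert (Hle : b l <= l).
  { destruct (Rle_or_lt (b l) l) as [?|Hgt]; auto. exfalso.
    destruct (Req_dec l xbar) as [Heq|Hneq]. { subst l. lra. }
    destruct (within_eps b _ l (Hc l ltac:(lra)) ((b l - l)/2) ltac:(lra)) as [d [Hd Hdd]].
    set (t := Rmin (l + Rmin d ((b l - l)/2) / 2) xbar).
    assert (Hmd : 0 < Rmin d ((b l - l)/2)) by (apply Rmin_case; lra).
    assert (Hmd1 : Rmin d ((b l - l)/2) <= d) by apply Rmin_l.
    assert (Hmd2 : Rmin d ((b l - l)/2) <= (b l - l)/2) by apply Rmin_r.
    assert (Ht1 : l < t) by (unfold t; apply Rmin_case; lra).
    assert (Ht2 : t <= xbar) by (unfold t; apply Rmin_r).
    assert (Ht3 : t <= l + Rmin d ((b l - l)/2) / 2) by (unfold t; apply Rmin_l).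
    assert (E t).
    { split; [lra|]. intros s Hs. destruct (Rlt_or_le s l) as [Hsl|Hsl].
      - apply Hbelow; lra.
      - assert (Hs' := Hdd s ltac:(lra) ltac:(rewrite Rabs_right; lra)).
        apply Rabs_def2 in Hs'. lra. }
    assert (t <= l) by (apply Hub; auto). lra. }
  assert (Hge : l <= b l).
  { destruct (Rle_or_lt l (b l)) as [?|Hlt]; auto. exfalso.
    assert (Hlpos : 0 < l). { destruct (Req_dec l 0) as [->|?]; lra. }
    destruct (within_eps b _ l (Hc l ltac:(lra)) ((l - b l)/2) ltac:(lra)) as [d [Hd Hdd]].
    set (s := Rmax 0 (l - Rmin d ((l - b l)/2) / 2)).
    assert (Hmd : 0 < Rmin d ((l - b l)/2)) by (apply Rmin_case; lra).
    assert (Hmd1 : Rmin d ((l - b l)/2) <= d) by apply Rmin_l.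
    assert (Hmd2 : Rmin d ((l - b l)/2) <= (l - b l)/2) by apply Rmin_r.
    assert (Hs1 : s < l) by (unfold s; apply Rmax_case; lra).
    assert (Hs2 : 0 <= s) by (unfold s; apply Rmax_l).
    assert (Hs3 : l - Rmin d ((l - b l)/2) / 2 <= s) by (unfold s; apply Rmax_r).
    assert (Hs' := Hdd s ltac:(lra) ltac:(rewrite Rabs_left; lra)).
    apply Rabs_def2 in Hs'. specialize (Hbelow s ltac:(lra)). lra. }
  exists l. split; [lra|]. split; [lra|].
  intros m Hm Hbm. destruct (Rle_or_lt l m) as [?|Hml]; auto.
  specialize (Hbelow m ltac:(lra)). lra.
Qed.

Theorem lemma5 (alpha : Rbar) (mu sigma : R -> R) (r : R)
    (U U1 U2 : R -> R) (ustar xbar : R) (psi phi eta : R -> R) (c : R) :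
  diffusion_assumptions alpha mu sigma ->
  0 < r ->
  a_assumptions mu r U ->
  U_assumptions mu sigma r U U1 U2 ustar ->
  is_xbar mu r U xbar ->
  is_psi alpha mu sigma r psi ->
  is_phi alpha mu sigma r phi ->
  is_eta psi phi mu r U xbar eta ->
  0 < eta 0 < ustar ->
  0 < c < xbar ->
  eta c < ustar ->
  exists eps : R,
    0 < eps < 2 * Rmin c (xbar - c) /\
    forall b : R -> R,
      cauchy_sol (f_eps c xbar eps) (F_eps c xbar eps) psi phi mu r U xbar (eta 0) b ->
      exists mbar : R, is_first_fixed_point b xbar mbar /\ mbar < ustar.
Proof.
  intros HD Hr Ha HU Hx Hpsi Hphi Heta [He0 He0u] [Hc0 Hcx] Hecu.
  assert (Hxb : 0 < xbar) by lra.
  assert (Final : forall eps b,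
     cauchy_sol (f_eps c xbar eps) (F_eps c xbar eps) psi phi mu r U xbar (eta 0) b ->
     (forall m, 0 <= m <= xbar -> b m < ustar) ->
     exists mbar : R, is_first_fixed_point b xbar mbar /\ mbar < ustar).
  { intros eps b [Hbnd [Hcont [_ Hb0]]] Hbu.
    destruct (first_fixed b xbar Hxb Hcont ltac:(lra) ltac:(apply (Hbnd xbar); lra)) as [mb Hmb].
    exists mb. split; auto. destruct Hmb as [Hm1 [Hm2 _]].
    rewrite <- Hm2. apply Hbu; auto. }
  destruct (Rlt_or_le xbar ustar) as [Hxu|Hux].
  { exists (Rmin (c/2) ((xbar - c)/2)). split.
    - split. { apply Rmin_case; lra. }
      assert (H1 := Rmin_l (c/2) ((xbar-c)/2)). assert (H2 := Rmin_r (c/2) ((xbar-c)/2)).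
      unfold Rmin at 2. destruct (Rle_dec c (xbar - c)); lra.
    - intros b Hb. apply (Final _ b Hb). intros m Hm.
      destruct Hb as [Hbnd _]. specialize (Hbnd m Hm). lra. }
  assert (HD' := HD).
  destruct HD' as [Ha0 [_ [_ [Hs [_ [_ [Hd _]]]]]]].
  assert (HI : forall z, 0 <= z -> inI alpha z) by (intros; apply inI_nonneg; auto).
  assert (Hsign := fun m Hm => N_sign alpha mu sigma r psi phi U m HD Hr Ha Hpsi Hphi Hm).
  assert (Hetam : forall m, 0 <= m <= xbar -> forall x, 0 <= x ->
            Nfun psi phi mu r U x m < 0 -> eta m < x).
  { intros m Hm x Hx0 HN. destruct (Heta m Hm) as [He1 He2].
    destruct (Rlt_or_le (eta m) x) as [?|Hle]; auto. exfalso.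
    destruct (Rle_lt_or_eq_dec _ _ Hle) as [Hlt|Heq].
    - destruct (Hsign m ltac:(lra) (eta m) x He1 Hx0 He2) as [_ H2]. specialize (H2 Hlt). lra.
    - subst x. lra. }
  assert (Hetaneg : forall m, 0 <= m <= xbar -> forall x, eta m < x ->
            Nfun psi phi mu r U x m < 0).
  { intros m Hm x Hx0. destruct (Heta m Hm) as [He1 He2].
    destruct (Hsign m ltac:(lra) (eta m) x He1 ltac:(lra) He2) as [H1 _]. auto. }
  set (y := (Rmax (eta 0) (eta c) + ustar) / 2).
  assert (Hy1 : eta 0 < y) by (unfold y; assert (H := Rmax_l (eta 0) (eta c)); assert (H' := Rmax_r (eta 0) (eta c)); lra).
  assert (Hy2 : eta c < y) by (unfold y; assert (H := Rmax_l (eta 0) (eta c)); assert (H' := Rmax_r (eta 0) (eta c)); lra).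
  assert (Hy3 : y < ustar) by (unfold y; apply Rmax_case; lra).
  assert (Hcc : c < eta c).
  { destruct (Rlt_or_le c (eta c)) as [?|Hle]; auto. exfalso.
    assert (HN : 0 < Nfun psi phi mu r U c c).
    { unfold Nfun, Dfun.
      replace (phi c * psi c - psi c * phi c + (Derive psi c * phi c - Derive phi c * psi c) * (mu c / r)
        - (Derive psi c * phi c - Derive phi c * psi c) * U c) with
        ((Derive psi c * phi c - Derive phi c * psi c) * ((mu c - r * U c) / r)) by (field; lra).
      apply Rmult_lt_0_compat.
      - assert (0 < Derive psi c) by (apply (psi_deriv_pos alpha mu sigma r); auto; apply HI; lra).
        assert (Derive phi c < 0) by (apply (phi_deriv_neg alpha mu sigma r); auto; apply HI; lra).
        assert (0 < psi c) by (apply (proj1 (proj2 Hpsi)); apply HI; lra).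
        assert (0 < phi c) by (apply (proj1 (proj2 Hphi)); apply HI; lra). nra.
      - destruct Hx as [_ [Hxp _]]. specialize (Hxp c ltac:(lra)). apply Rdiv_lt_0_compat; lra. }
    destruct (Heta c ltac:(lra)) as [He1 He2].
    destruct (Rle_lt_or_eq_dec _ _ Hle) as [Hlt|Heq].
    - destruct (Hsign c ltac:(lra) (eta c) c He1 ltac:(lra) He2) as [H1 _]. specialize (H1 Hlt). lra.
    - rewrite Heq in He2. lra. }
  assert (HA : forall m, 0 <= m <= c -> Nfun psi phi mu r U y m < 0).
  { apply (N_neg_on alpha mu sigma r U U1 U2 ustar xbar psi phi y c); auto; try lra.
    - apply Hetaneg; lra.
    - apply Hetaneg; lra. }
  assert (HA' : forall m, 0 <= m <= c -> forall x, y <= x -> Nfun psi phi mu r U x m < 0).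
  { intros m Hm x Hxy. apply Hetaneg; try lra.
    assert (eta m < y); [|lra]. apply Hetam; try lra. apply HA; auto. }
  destruct (NDG_bound alpha mu sigma r U U1 U2 ustar psi phi xbar HD Hr Ha HU Hpsi Hphi Hxb) as [K [HK0 HK]].
  set (eps := Rmin (Rmin (c/2) ((xbar - c)/2)) (Rmin (1/(4*xbar)) ((ustar - y)/(8*K*xbar + 8)))).
  assert (Hden : 0 < 8*K*xbar + 8) by nra.
  assert (Hep : 0 < eps).
  { unfold eps. repeat apply Rmin_case; try lra.
    - apply Rdiv_lt_0_compat; lra.
    - apply Rdiv_lt_0_compat; lra. }
  assert (Hep1 : eps <= c/2) by (unfold eps; eapply Rle_trans; [apply Rmin_l| apply Rmin_l]).
  assert (Hep2 : eps <= (xbar - c)/2) by (unfold eps; eapply Rle_trans; [apply Rmin_l| apply Rmin_r]).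
  assert (Hep3 : eps <= 1/(4*xbar)) by (unfold eps; eapply Rle_trans; [apply Rmin_r| apply Rmin_l]).
  assert (Hep4 : eps <= (ustar - y)/(8*K*xbar + 8)) by (unfold eps; eapply Rle_trans; [apply Rmin_r| apply Rmin_r]).
  assert (Hex : eps * xbar <= 1/2).
  { apply (Rmult_le_compat_r xbar) in Hep3; [|lra].
    replace (1 / (4 * xbar) * xbar) with (1/4) in Hep3 by (field; lra). lra. }
  assert (Hec : eps * c < 1/2) by nra.
  assert (HepK : 4 * eps * K * xbar < ustar - y).
  { apply (Rmult_le_compat_r (8*K*xbar + 8)) in Hep4; [|lra].
    replace ((ustar - y) / (8 * K * xbar + 8) * (8 * K * xbar + 8)) with (ustar - y) in Hep4 by (field; lra).
    nra. }
  exists eps. split.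
  { split; auto.
    assert (Rmin c (xbar - c) = c \/ Rmin c (xbar - c) = xbar - c) as [E|E]
      by (unfold Rmin; destruct Rle_dec; auto); rewrite E; lra. }
  intros b Hb. apply (Final eps b Hb).
  destruct Hb as [Hbnd [Hcont [Hder Hb0]]].
  set (bc := fun t => b (clamp 0 xbar t)).
  assert (Hbc : forall t, continuity_pt bc t) by (apply clamp_cont; auto; lra).
  assert (Hbceq : forall t, 0 <= t <= xbar -> bc t = b t) by (intros; unfold bc; rewrite clamp_id; auto).
  assert (HfF : forall m, 0 < m < xbar -> 0 < f_eps c xbar eps m / F_eps c xbar eps m).
  { intros m Hm. apply Rdiv_lt_0_compat.
    - assert (H := f_ge_eps c xbar eps ltac:(lra) Hep Hep1 Hex Hec m ltac:(lra)). lra.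
    - assert (H := F_ge_lin c xbar eps ltac:(lra) Hep Hep1 Hex Hec m ltac:(lra)). nra. }
  assert (HE : forall m, 0 < m < xbar ->
     Efun (f_eps c xbar eps) (F_eps c xbar eps) psi phi mu r U (b m) m =
     (f_eps c xbar eps m / F_eps c xbar eps m) *
       (Nfun psi phi mu r U (b m) m / (Dfun psi phi (b m) m * Gfun mu r (b m)))).
  { intros m Hm. destruct (HK (b m) m ltac:(apply Hbnd; lra) ltac:(lra)) as [HDG _].
    assert (Dfun psi phi (b m) m <> 0) by (intro E; rewrite E in HDG; lra).
    assert (Gfun mu r (b m) <> 0) by (intro E; rewrite E in HDG; lra).
    unfold Efun. field. repeat split; auto.
    assert (Hff := HfF m Hm). intro E. rewrite E in Hff. unfold Rdiv in Hff. rewrite Rinv_0 in Hff. lra. }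
  assert (HB : forall m, 0 <= m <= c -> b m < y).
  { intros m1 Hm1. destruct (Rlt_or_le (b m1) y) as [?|Hge]; auto. exfalso.
    destruct (continuity_ab_maj bc 0 m1 ltac:(lra) (fun t _ => Hbc t)) as [p [Hpmax Hp]].
    assert (Hbp : y <= b p).
    { specialize (Hpmax m1 ltac:(lra)). rewrite !Hbceq in Hpmax by lra. lra. }
    assert (Hp0 : 0 < p).
    { destruct (Req_dec p 0) as [E|]; [|lra]. rewrite E, Hb0 in Hbp. lra. }
    destruct (Hder p ltac:(lra)) as [Hdp _].
    assert (Hneg : Efun (f_eps c xbar eps) (F_eps c xbar eps) psi phi mu r U (b p) p < 0).
    { rewrite HE by lra.
      destruct (HK (b p) p ltac:(apply Hbnd; lra) ltac:(lra)) as [HDG _].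
      assert (Nfun psi phi mu r U (b p) p < 0) by (apply HA'; lra).
      assert (Nfun psi phi mu r U (b p) p / (Dfun psi phi (b p) p * Gfun mu r (b p)) < 0).
      { unfold Rdiv. apply Rmult_neg_pos; auto. apply Rinv_0_lt_compat; auto. }
      assert (Hff := HfF p ltac:(lra)). nra. }
    destruct (deriv_neg_local b p _ Hdp Hneg) as [dl [Hdl Hloc]].
    set (h := Rmin (dl/2) (p/2)).
    assert (0 < h < dl) by (unfold h; apply Rmin_case_strong; intros; lra).
    assert (h <= p/2) by (unfold h; apply Rmin_r).
    destruct (Hloc h ltac:(lra)) as [H1 _].
    specialize (Hpmax (p - h) ltac:(lra)). rewrite !Hbceq in Hpmax by lra. lra. }
  assert (HEb : forall m, c < m < xbar ->
     Efun (f_eps c xbar eps) (F_eps c xbar eps) psi phi mu r U (b m) m <= 4 * eps * K).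
  { intros m Hm. rewrite HE by lra.
    rewrite (f_right c xbar eps Hep Hep1 m ltac:(lra)).
    assert (HF := F_ge_quarter c xbar eps ltac:(lra) Hep Hep1 Hex Hec m ltac:(lra)).
    destruct (HK (b m) m ltac:(apply Hbnd; lra) ltac:(lra)) as [HDG HNb].
    assert (Hq : Nfun psi phi mu r U (b m) m / (Dfun psi phi (b m) m * Gfun mu r (b m)) <= K).
    { apply (Rmult_le_reg_r (Dfun psi phi (b m) m * Gfun mu r (b m))); auto.
      unfold Rdiv. rewrite Rmult_assoc, Rinv_l by lra. rewrite Rmult_1_r.
      eapply Rle_trans; [apply Rle_abs| exact HNb]. }
    assert (Hq2 : eps / F_eps c xbar eps m <= 4 * eps).
    { apply (Rmult_le_reg_r (F_eps c xbar eps m)); [lra|].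
      unfold Rdiv. rewrite Rmult_assoc, Rinv_l by lra. nra. }
    assert (0 < eps / F_eps c xbar eps m) by (apply Rdiv_lt_0_compat; lra).
    apply Rle_trans with (eps / F_eps c xbar eps m * K).
    - apply Rmult_le_compat_l; lra.
    - apply Rmult_le_compat_r; lra. }
  assert (HC : forall m, c < m <= xbar -> b m <= b c + 4 * eps * K * (m - c)).
  { intros m Hm.
    set (df := fun x => Rmin (Efun (f_eps c xbar eps) (F_eps c xbar eps) psi phi mu r U (b x) x) (4 * eps * K)).
    destruct (MVT_gen bc c m df) as [xi [_ Hxi]].
    - rewrite Rmin_left by lra. rewrite Rmax_right by lra. intros x Hx'.
      unfold df. rewrite Rmin_left by (apply HEb; lra).
      apply (is_derive_ext_loc b bc).
      + assert (Hpd : 0 < Rmin x (xbar - x)) by (apply Rmin_case; lra).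
        exists (mkposreal _ Hpd). intros t Ht. change (Rabs (t - x) < Rmin x (xbar - x)) in Ht.
        assert (Rmin x (xbar - x) <= x) by apply Rmin_l.
        assert (Rmin x (xbar - x) <= xbar - x) by apply Rmin_r.
        apply Rabs_def2 in Ht. rewrite Hbceq; auto. lra.
      + apply (Hder x). lra.
    - intros; apply Hbc.
    - rewrite !Hbceq in Hxi by lra.
      assert (df xi <= 4 * eps * K) by apply Rmin_r.
      assert (df xi * (m - c) <= 4 * eps * K * (m - c)) by (apply Rmult_le_compat_r; lra).
      lra. }
  intros m Hm. destruct (Rle_or_lt m c) as [Hmc|Hmc].
  - specialize (HB m ltac:(lra)). lra.
  - specialize (HC m ltac:(lra)). specialize (HB c ltac:(lra)).
    assert (4 * eps * K * (m - c) <= 4 * eps * K * xbar).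
    { apply Rmult_le_compat_l; [|lra]. nra. }
    lra.
Qed.
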